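(* Assume (A1)–(A4) and let $b$ be consistent. Then the ADMM sequences $\{x_k\}$ and $\{y_k\}$ are bounded and $$\sum_{k=1}^\infty\big(D_{\mu_k}f(y_{k+1},y_k)+E_k\big)<\infty.$$ In particular $Ax_k\to b$, $Wx_k-y_k\to0$ and $y_{k+1}-y_k\to0$ as $k\to\infty$.
   Context: $\mathcal X,\mathcal Y,\mathcal H$ are real Hilbert spaces. Standing assumptions: (A1) $A:\mathcal X\to\mathcal H$ is bounded linear. (A2) $f:\mathcal Y\to(-\infty,\infty]$ is proper, lower semicontinuous and strongly convex with constant $c_0>0$: $f(ty_1+(1-t)y_2)+c_0t(1-t)\|y_1-y_2\|^2\le tf(y_1)+(1-t)f(y_2)$ for all $y_1,y_2$, $t\in[0,1]$. (A3) $W:\mathscr D(W)\subset\mathcal X\to\mathcal Y$ is a densely defined closed linear operator. (A4) There is $c_1>0$ with $\|Ax\|^2+\|Wx\|^2\ge c_1\|x\|^2$ for all $x\in\mathscr D(W)$. $\mathscr D(f)=\{y:f(y)<\infty\}$; $b\in\mathcal H$ is consistent if $b=Ax$ for some $x\in\mathscr D(W)$ with $Wx\in\mathscr D(f)$. ADMM: fix $\rho_1,\rho_2>0$ and initial $y_0\in\mathcal Y$, $\lambda_0\in\mathcal H$, $\mu_0\in\mathcal Y$. For $k=0,1,\dots$: $x_{k+1}=\arg\min_{x\in\mathscr D(W)}\{\langle\lambda_k,Ax\rangle+\langle\mu_k,Wx\rangle+\frac{\rho_1}{2}\|Ax-b\|^2+\frac{\rho_2}{2}\|Wx-y_k\|^2\}$,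 $y_{k+1}=\arg\min_{y\in\mathcal Y}\{f(y)-\langle\mu_k,y\rangle+\frac{\rho_2}{2}\|Wx_{k+1}-y\|^2\}$, $\lambda_{k+1}=\lambda_k+\rho_1(Ax_{k+1}-b)$, $\mu_{k+1}=\mu_k+\rho_2(Wx_{k+1}-y_{k+1})$. (These minimizers exist and are unique.) Residuals $r_k=Ax_k-b$, $s_k=Wx_k-y_k$ and $E_k=\rho_1\|r_k\|^2+\rho_2\|s_k\|^2+\rho_2\|y_k-y_{k-1}\|^2$ for $k\ge1$. One has $\mu_k\in\partial f(y_k)$ for $k\ge1$. Bregman distance: for $y$ with $\mu\in\partial f(y)$, $D_\mu f(\bar y,y)=f(\bar y)-f(y)-\langle\mu,\bar y-y\rangle$. *)

(* Defs.v *)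
From Stdlib Require Import Reals Lra.
Open Scope R_scope.

Record Hilbert := {
  hcar :> Type;
  hzero : hcar;
  hadd : hcar -> hcar -> hcar;
  hopp : hcar -> hcar;
  hscal : R -> hcar -> hcar;
  hinner : hcar -> hcar -> R;
  hadd_assoc : forall x y z, hadd x (hadd y z) = hadd (hadd x y) z;
  hadd_comm : forall x y, hadd x y = hadd y x;
  hadd_zero : forall x, hadd x hzero = x;
  hadd_opp : forall x, hadd x (hopp x) = hzero;
  hscal_assoc : forall a b x, hscal a (hscal b x) = hscal (a * b) x;
  hscal_one : forall x, hscal 1 x = x;
  hscal_distr_l : forall a x y, hscal a (hadd x y) = hadd (hscal a x) (hscal a y);
  hscal_distr_r : forall a b x, hscal (a + b) x = hadd (hscal a x) (hscal b x);
  hinner_sym : forall x y, hinner x y = hinner y x;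
  hinner_add_l : forall x y z, hinner (hadd x y) z = hinner x z + hinner y z;
  hinner_scal_l : forall a x y, hinner (hscal a x) y = a * hinner x y;
  hinner_pos : forall x, 0 <= hinner x x;
  hinner_def : forall x, hinner x x = 0 -> x = hzero;
  hcomplete : forall u : nat -> hcar,
    (forall eps, 0 < eps -> exists N, forall m n, (N <= m)%nat -> (N <= n)%nat ->
        sqrt (hinner (hadd (u m) (hopp (u n))) (hadd (u m) (hopp (u n)))) < eps) ->
    exists l, forall eps, 0 < eps -> exists N, forall n, (N <= n)%nat ->
        sqrt (hinner (hadd (u n) (hopp l)) (hadd (u n) (hopp l))) < eps
}.

Arguments hzero {h}.
Arguments hadd {h}.
Arguments hopp {h}.
Arguments hscal {h}.
Arguments hinner {h}.

Definition hsub {X : Hilbert} (x y : X) : X := hadd x (hopp y).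
Definition nrm2 {X : Hilbert} (x : X) : R := hinner x x.
Definition nrm {X : Hilbert} (x : X) : R := sqrt (hinner x x).

Definition conv_to {X : Hilbert} (u : nat -> X) (l : X) : Prop :=
  forall eps, 0 < eps -> exists N, forall n, (N <= n)%nat -> nrm (hsub (u n) l) < eps.

Definition bounded_seq {X : Hilbert} (u : nat -> X) : Prop :=
  exists M, forall n, nrm (u n) <= M.

Definition bounded_linear {X H : Hilbert} (A : X -> H) : Prop :=
  (forall x y, A (hadd x y) = hadd (A x) (A y)) /\
  (forall a x, A (hscal a x) = hscal a (A x)) /\
  (exists C, forall x, nrm (A x) <= C * nrm x).

Definition densely_defined_closed_linear {X Y : Hilbert} (D : X -> Prop) (W : X -> Y) : Prop :=
  D hzero /\
  (forall x y, D x -> D y -> D (hadd x y)) /\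
  (forall a x, D x -> D (hscal a x)) /\
  (forall x y, D x -> D y -> W (hadd x y) = hadd (W x) (W y)) /\
  (forall a x, D x -> W (hscal a x) = hscal a (W x)) /\
  (forall x eps, 0 < eps -> exists z, D z /\ nrm (hsub x z) < eps) /\
  (forall (u : nat -> X) x y, (forall n, D (u n)) -> conv_to u x ->
       conv_to (fun n => W (u n)) y -> D x /\ W x = y).

(* Extended-real valued functions into (-oo, +oo]: None stands for +oo. *)
Definition ext_lt (c : R) (v : option R) : Prop :=
  match v with None => True | Some a => c < a end.

Definition proper {Y : Hilbert} (f : Y -> option R) : Prop := exists y, f y <> None.

Definition lsc {Y : Hilbert} (f : Y -> option R) : Prop :=
  forall y c, ext_lt c (f y) ->
    exists delta, 0 < delta /\ forall z, nrm (hsub z y) < delta -> ext_lt c (f z).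

(* strong convexity with constant c0; when f y1 or f y2 = +oo the inequality is trivial
   (with the convention 0 * (+oo) = 0) *)
Definition strongly_convex {Y : Hilbert} (f : Y -> option R) (c0 : R) : Prop :=
  forall y1 y2 t v1 v2, 0 <= t <= 1 -> f y1 = Some v1 -> f y2 = Some v2 ->
    exists w, f (hadd (hscal t y1) (hscal (1 - t) y2)) = Some w /\
      w + c0 * t * (1 - t) * nrm2 (hsub y1 y2) <= t * v1 + (1 - t) * v2.

Definition consistent {X Y H : Hilbert} (A : X -> H) (D : X -> Prop) (W : X -> Y)
  (f : Y -> option R) (b : H) : Prop :=
  exists x, D x /\ b = A x /\ f (W x) <> None.

Definition x_obj {X Y H : Hilbert} (A : X -> H) (W : X -> Y) (b : H) (rho1 rho2 : R)
  (lam : H) (mu : Y) (yk : Y) (x : X) : R :=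
  hinner lam (A x) + hinner mu (W x) + rho1 / 2 * nrm2 (hsub (A x) b)
  + rho2 / 2 * nrm2 (hsub (W x) yk).

Definition ADMM_seq {X Y H : Hilbert} (A : X -> H) (D : X -> Prop) (W : X -> Y)
  (f : Y -> option R) (b : H) (rho1 rho2 : R)
  (x : nat -> X) (y : nat -> Y) (lam : nat -> H) (mu : nat -> Y) : Prop :=
  forall k,
    (D (x (S k)) /\ forall z, D z ->
       x_obj A W b rho1 rho2 (lam k) (mu k) (y k) (x (S k))
       <= x_obj A W b rho1 rho2 (lam k) (mu k) (y k) z) /\
    (exists v, f (y (S k)) = Some v /\ forall z w, f z = Some w ->
       v - hinner (mu k) (y (S k)) + rho2 / 2 * nrm2 (hsub (W (x (S k))) (y (S k)))
       <= w - hinner (mu k) z + rho2 / 2 * nrm2 (hsub (W (x (S k))) z)) /\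
    lam (S k) = hadd (lam k) (hscal rho1 (hsub (A (x (S k))) b)) /\
    mu (S k) = hadd (mu k) (hscal rho2 (hsub (W (x (S k))) (y (S k)))).

Definition bregman {Y : Hilbert} (f : Y -> option R) (mu : Y) (yb y : Y) : option R :=
  match f yb, f y with
  | Some a, Some c => Some (a - c - hinner mu (hsub yb y))
  | _, _ => None
  end.

(* E_k, for k >= 1 *)
Definition Ek {X Y H : Hilbert} (A : X -> H) (W : X -> Y) (b : H) (rho1 rho2 : R)
  (x : nat -> X) (y : nat -> Y) (k : nat) : R :=
  rho1 * nrm2 (hsub (A (x k)) b) + rho2 * nrm2 (hsub (W (x k)) (y k))
  + rho2 * nrm2 (hsub (y k) (y (k - 1)%nat)).

(* Main.v *)
Require Import Defs.
From Stdlib Require Import Reals Lra Lia.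
Open Scope R_scope.


Lemma ip_zero_l {X : Hilbert} (v : X) : hinner (@hzero X) v = 0.
Proof.
  assert (E : hinner (hadd (@hzero X) hzero) v = hinner (@hzero X) v) by (rewrite hadd_zero; reflexivity).
  rewrite hinner_add_l in E. lra.
Qed.
Lemma ip_zero_r {X : Hilbert} (v : X) : hinner v (@hzero X) = 0.
Proof. rewrite hinner_sym; apply ip_zero_l. Qed.
Lemma ip_add_r {X : Hilbert} (u v w : X) : hinner u (hadd v w) = hinner u v + hinner u w.
Proof. rewrite hinner_sym, hinner_add_l, (hinner_sym _ v), (hinner_sym _ w); reflexivity. Qed.
Lemma ip_scal_r {X : Hilbert} a (u v : X) : hinner u (hscal a v) = a * hinner u v.
Proof. rewrite hinner_sym, hinner_scal_l, hinner_sym; reflexivity. Qed.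
Lemma ip_opp_l {X : Hilbert} (u v : X) : hinner (hopp u) v = - hinner u v.
Proof.
  assert (E : hinner (hadd u (hopp u)) v = 0) by (rewrite hadd_opp; apply ip_zero_l).
  rewrite hinner_add_l in E. lra.
Qed.
Lemma ip_opp_r {X : Hilbert} (u v : X) : hinner u (hopp v) = - hinner u v.
Proof. rewrite hinner_sym, ip_opp_l, hinner_sym; reflexivity. Qed.

Lemma vec_eq {X : Hilbert} (u v : X) : hinner (hsub u v) (hsub u v) = 0 -> u = v.
Proof.
  intro E. apply hinner_def in E. unfold hsub in E.
  transitivity (hadd (hadd u (hopp v)) v).
  - rewrite <- hadd_assoc, (hadd_comm _ (hopp v)), hadd_opp, hadd_zero; reflexivity.
  - rewrite E, hadd_comm, hadd_zero; reflexivity.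
Qed.

Ltac expand := unfold nrm2, hsub;
  repeat (rewrite ?hinner_add_l, ?ip_add_r, ?hinner_scal_l, ?ip_scal_r, ?ip_opp_l, ?ip_opp_r,
         ?ip_zero_l, ?ip_zero_r).
Ltac symnorm := repeat match goal with |- context [@hinner ?h ?u ?v] =>
  match goal with |- context [@hinner h v u] =>
   tryif constr_eq u v then fail else rewrite (hinner_sym h u v) end end.

Lemma hopp_scal {X : Hilbert} (u : X) : hopp u = hscal (-1) u.
Proof. apply vec_eq. expand. lra. Qed.
Lemma hsub_zero {X : Hilbert} (u : X) : hsub u hzero = u.
Proof. apply vec_eq. expand. lra. Qed.

Lemma quad_zero G P : (forall t, 0 <= t*G + t*t*P) -> G = 0.
Proof.
  intro H. destruct (Req_dec G 0) as [|n]; [assumption|exfalso].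
  set (s := / (Rabs P + 1)).
  assert (Hs : 0 < s) by (unfold s; apply Rinv_0_lt_compat; pose proof (Rabs_pos P); lra).
  assert (HsP : s * P < 1).
  { unfold s. pose proof (Rle_abs P). pose proof (Rabs_pos P).
    apply (Rmult_lt_reg_l (Rabs P + 1)); [lra|].
    rewrite <- Rmult_assoc, Rinv_r by lra. lra. }
  specialize (H (- s * G)).
  assert (0 < G*G) by (apply Rsqr_pos_lt in n; unfold Rsqr in n; exact n).
  assert (E: - s * G * G + - s * G * (- s * G) * P = (s*G*G) * (s*P - 1)) by ring.
  rewrite E in H.
  assert (0 < s*G*G) by (rewrite Rmult_assoc; apply Rmult_lt_0_compat; lra).
  nra.
Qed.

Lemma small_pos a b : (forall t, 0 < t -> t <= 1 -> 0 <= t*a + t*t*b) -> 0 <= a.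
Proof.
  intro H. destruct (Rle_lt_dec 0 a) as [|n]; [assumption|exfalso].
  set (t := Rmin 1 (- a / (2*(Rabs b + 1)))).
  pose proof (Rabs_pos b). pose proof (Rle_abs b).
  assert (Hq : 0 < - a / (2*(Rabs b + 1))) by (apply Rdiv_lt_0_compat; lra).
  assert (Ht : 0 < t) by (unfold t; apply Rmin_glb_lt; lra).
  assert (Ht1 : t <= 1) by (unfold t; apply Rmin_l).
  assert (Ht2 : t <= - a / (2*(Rabs b + 1))) by (unfold t; apply Rmin_r).
  assert (Ht3 : t * (2*(Rabs b + 1)) <= - a).
  { apply (Rmult_le_compat_r (2*(Rabs b + 1))) in Ht2; [|lra].
    unfold Rdiv in Ht2. rewrite Rmult_assoc, Rinv_l in Ht2 by lra. lra. }
  specialize (H t Ht Ht1).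
  assert (0 <= a + t*b).
  { apply (Rmult_le_reg_l t); [lra|]. rewrite Rmult_0_r. nra. }
  assert (t*b <= t*Rabs b) by (apply Rmult_le_compat_l; lra).
  nra.
Qed.

Lemma young {X : Hilbert} (e v : X) c r : 0 < c ->
  0 <= c/2 * nrm2 e - r * hinner v e + (r*r/(2*c)) * nrm2 v.
Proof.
  intro Hc. pose proof (hinner_pos _ (hsub (hscal c e) (hscal r v))) as Hp.
  revert Hp. expand. symnorm. intro Hp.
  match goal with |- 0 <= ?g => match type of Hp with 0 <= ?h =>
    assert (E : g = /(2*c) * h) by (field; lra) end end.
  rewrite E. apply Rmult_le_pos; [|lra]. left; apply Rinv_0_lt_compat; lra.
Qed.

Lemma conv_lemma (g : nat -> R) B c : 0 < c -> (forall n, 0 <= g n) ->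
  (forall n, INR (S n) * (c * g (S (S n))) <= B) ->
  forall eps, 0 < eps -> exists N, forall n, (N <= n)%nat -> sqrt (g n) < eps.
Proof.
  intros Hc Hg HB eps He.
  assert (Hce : 0 < c*(eps*eps)) by (apply Rmult_lt_0_compat; nra).
  destruct (INR_archimed (c*(eps*eps)) B Hce) as [N HN].
  exists (S (S N)). intros n Hn.
  destruct n as [|[|m]]; [lia|lia|].
  specialize (HB m).
  assert (HNm : INR N <= INR (S m)) by (apply le_INR; lia).
  rewrite <- (sqrt_square eps) by lra. apply sqrt_lt_1_alt. split; [apply Hg|].
  specialize (Hg (S (S m))).
  assert (INR N * (c * (eps*eps)) <= INR (S m) * (c*(eps*eps))) by (apply Rmult_le_compat_r; lra).
  assert (0 < INR (S m)) by (apply lt_0_INR; lia).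
  destruct (Rlt_dec (g (S (S m))) (eps*eps)) as [|n]; [assumption|exfalso].
  assert (c*(eps*eps) <= c * g (S (S m))) by (apply Rmult_le_compat_l; lra).
  assert (INR (S m) * (c*(eps*eps)) <= INR (S m) * (c * g (S (S m)))) by (apply Rmult_le_compat_l; lra).
  lra.
Qed.

Lemma bounded_lemma {X : Hilbert} (u : nat -> X) B :
  (forall n, (1 <= n)%nat -> nrm2 (u n) <= B) -> bounded_seq u.
Proof.
  intro H. exists (Rmax (sqrt B) (nrm (u 0%nat))). intro n. destruct n.
  - apply Rmax_r.
  - eapply Rle_trans; [|apply Rmax_l]. apply sqrt_le_1_alt. apply H. lia.
Qed.

Lemma A_sub {X H : Hilbert} (A : X -> H) :
  (forall x y, A (hadd x y) = hadd (A x) (A y)) -> (forall a x, A (hscal a x) = hscal a (A x)) ->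
  forall u v, A (hsub u v) = hsub (A u) (A v).
Proof. intros Ha Hs u v. unfold hsub. rewrite Ha, !hopp_scal, Hs. reflexivity. Qed.
Lemma A_addscal {X H : Hilbert} (A : X -> H) :
  (forall x y, A (hadd x y) = hadd (A x) (A y)) -> (forall a x, A (hscal a x) = hscal a (A x)) ->
  forall u t d, A (hadd u (hscal t d)) = hadd (A u) (hscal t (A d)).
Proof. intros Ha Hs u t d. rewrite Ha, Hs. reflexivity. Qed.

Lemma D_sub {X Y : Hilbert} (D : X -> Prop) (W : X -> Y) : densely_defined_closed_linear D W ->
  forall u v, D u -> D v -> D (hsub u v) /\ W (hsub u v) = hsub (W u) (W v).
Proof.
  intros [H0 [Hadd [Hscal [Wadd [Wscal _]]]]] u v Du Dv. unfold hsub. rewrite !hopp_scal.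
  split; [auto|]. rewrite Wadd, Wscal; auto.
Qed.
Lemma D_addscal {X Y : Hilbert} (D : X -> Prop) (W : X -> Y) : densely_defined_closed_linear D W ->
  forall u t d, D u -> D d -> D (hadd u (hscal t d)) /\ W (hadd u (hscal t d)) = hadd (W u) (hscal t (W d)).
Proof.
  intros [H0 [Hadd [Hscal [Wadd [Wscal _]]]]] u t d Du Dd.
  split; [auto|]. rewrite Wadd, Wscal; auto.
Qed.

Lemma tri2 {X : Hilbert} (u a : X) : nrm2 u <= 2 * nrm2 a + 2 * nrm2 (hsub u a).
Proof. pose proof (hinner_pos _ (hsub (hscal 2 a) u)) as P. revert P. expand. symnorm. intro. lra. Qed.
Lemma tri2' {X : Hilbert} (u a : X) : nrm2 u <= 2 * nrm2 a + 2 * nrm2 (hsub a u).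
Proof. pose proof (hinner_pos _ (hsub (hscal 2 a) u)) as P. revert P. expand. symnorm. intro. lra. Qed.
Lemma nrm2_pos {X : Hilbert} (u : X) : 0 <= nrm2 u.
Proof. apply hinner_pos. Qed.
Lemma div_bound a u v : 0 < a -> a * u <= v -> u <= v / a.
Proof. intros. apply (Rmult_le_reg_l a); [lra|]. unfold Rdiv. rewrite <- Rmult_assoc, (Rmult_comm a v), Rmult_assoc, Rinv_r; lra. Qed.
Lemma sum_nonneg (g : nat -> R) : (forall n, 0 <= g n) -> forall N, 0 <= sum_f_R0 g N.
Proof. intros Hg N; induction N; simpl; [apply Hg|]. pose proof (Hg (S N)); lra. Qed.

Theorem lemma2p5 (X Y H : Hilbert) (A : X -> H) (f : Y -> option R) (c0 : R)
  (D : X -> Prop) (W : X -> Y) (c1 : R) (b : H) (rho1 rho2 : R)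
  (x : nat -> X) (y : nat -> Y) (lam : nat -> H) (mu : nat -> Y) :
  bounded_linear A ->
  proper f -> lsc f -> 0 < c0 -> strongly_convex f c0 ->
  densely_defined_closed_linear D W ->
  0 < c1 -> (forall z, D z -> nrm2 (A z) + nrm2 (W z) >= c1 * nrm2 z) ->
  consistent A D W f b ->
  0 < rho1 -> 0 < rho2 ->
  ADMM_seq A D W f b rho1 rho2 x y lam mu ->
  bounded_seq x /\ bounded_seq y /\
  (exists d : nat -> R,
     (forall k, (1 <= k)%nat -> bregman f (mu k) (y (S k)) (y k) = Some (d k)) /\
     exists l, infinite_sum (fun n => d (S n) + Ek A W b rho1 rho2 x y (S n)) l) /\
  conv_to (fun k => A (x k)) b /\
  conv_to (fun k => hsub (W (x k)) (y k)) hzero /\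
  conv_to (fun k => hsub (y (S k)) (y k)) hzero.
Proof.
  intros HA Hprop Hlsc Hc0 Hsc HW Hc1 HA4 Hcons Hr1 Hr2 Hadmm.
  destruct HA as [HAadd [HAscal _]].
  pose proof (A_sub A HAadd HAscal) as Asub.
  pose proof (A_addscal A HAadd HAscal) as Aas.
  pose proof (D_sub D W HW) as Dsub.
  pose proof (D_addscal D W HW) as Das.
  destruct Hcons as [xh [Dxh [Hb Hfh]]].
  destruct (f (W xh)) as [fh|] eqn:Efh; [|congruence].
  set (fval := fun k => match f (y k) with Some v => v | None => 0 end).
  assert (Hfv : forall k, f (y (S k)) = Some (fval (S k))).
  { intro k. destruct (Hadmm k) as [_ [[v [Hv _]] _]]. unfold fval. rewrite Hv. reflexivity. }
  assert (HDx : forall k, D (x (S k))) by (intro k; apply (Hadmm k)).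
  assert (Hlam : forall k, lam (S k) = hadd (lam k) (hscal rho1 (hsub (A (x (S k))) b))) by (intro k; apply (Hadmm k)).
  assert (Hmu : forall k, mu (S k) = hadd (mu k) (hscal rho2 (hsub (W (x (S k))) (y (S k))))) by (intro k; apply (Hadmm k)).
  assert (L1 : forall k d, D d -> hinner (lam k) (A d) + hinner (mu k) (W d)
     + rho1 * hinner (hsub (A (x (S k))) b) (A d) + rho2 * hinner (hsub (W (x (S k))) (y k)) (W d) = 0).
  { intros k d Hd. apply (quad_zero _ (rho1/2 * nrm2 (A d) + rho2/2 * nrm2 (W d))). intro t.
    destruct (Hadmm k) as [[_ Hmin] _].
    destruct (Das (x (S k)) t d (HDx k) Hd) as [Dz Wz].
    specialize (Hmin _ Dz). unfold x_obj in Hmin. rewrite Aas, Wz in Hmin.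
    revert Hmin. expand. symnorm. intro. lra. }
  assert (L2 : forall k z w, f z = Some w ->
     fval (S k) + hinner (mu (S k)) (hsub z (y (S k))) + c0 * nrm2 (hsub z (y (S k))) <= w).
  { intros k z w Hz. destruct (Hadmm k) as [_ [[v [Hv Hymin]] _]].
    rewrite Hfv in Hv. injection Hv as Hv. subst v.
    cut (0 <= w - fval (S k) - hinner (mu (S k)) (hsub z (y (S k))) - c0 * nrm2 (hsub z (y (S k)))); [lra|].
    apply (small_pos _ ((c0 + rho2/2) * nrm2 (hsub z (y (S k))))).
    intros t Ht0 Ht1.
    destruct (Hsc z (y (S k)) t w (fval (S k)) (conj (Rlt_le _ _ Ht0) Ht1) Hz (Hfv k)) as [wt [Hwt Hineq]].
    pose proof (Hymin _ _ Hwt) as Hm.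
    rewrite Hmu. revert Hineq Hm. expand. symnorm. intros. lra. }

  pose (Rr := fun k => nrm2 (hsub (A (x k)) b)).
  pose (Sq := fun k => nrm2 (hsub (W (x k)) (y k))).
  pose (U := fun k => nrm2 (hsub (y k) (y (k-1)%nat))).
  pose (E := fun k => Ek A W b rho1 rho2 x y k).
  assert (HE : forall k, E k = rho1 * Rr k + rho2 * Sq k + rho2 * U k) by reflexivity.
  assert (HU : forall j, U (S j) = nrm2 (hsub (y (S j)) (y j))).
  { intro j. unfold U. replace (S j - 1)%nat with j by lia. reflexivity. }
  assert (Rp : forall k, 0 <= Rr k) by (intro; apply nrm2_pos).
  assert (Sp : forall k, 0 <= Sq k) by (intro; apply nrm2_pos).
  assert (Up : forall k, 0 <= U k) by (intro; apply nrm2_pos).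
  pose (Psi := fun k => fval k + hinner (lam k) (hsub (A (x k)) b) + hinner (mu k) (hsub (W (x k)) (y k))
     + rho2 * hinner (hsub (y k) (y (k-1)%nat)) (hsub (W (x k)) (y k))).
  assert (HPsi : forall j, Psi (S j) = fval (S j) + hinner (lam (S j)) (hsub (A (x (S j))) b) + hinner (mu (S j)) (hsub (W (x (S j))) (y (S j)))
     + rho2 * hinner (hsub (y (S j)) (y j)) (hsub (W (x (S j))) (y (S j)))).
  { intro j. unfold Psi. replace (S j - 1)%nat with j by lia. reflexivity. }
  assert (CA : forall j, E (S (S j)) + 4 * c0 * U (S (S j)) <= E (S j)).
  { intro j. rewrite !HE, !HU. unfold Rr, Sq.
    destruct (Dsub _ _ (HDx (S j)) (HDx j)) as [Dd Wd].
    pose proof (L1 (S j) _ Dd) as H1. pose proof (L1 j _ Dd) as H2.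
    rewrite Asub, Wd in H1, H2.
    pose proof (L2 j _ _ (Hfv (S j))) as H3. pose proof (L2 (S j) _ _ (Hfv j)) as H4.
    rewrite Hmu in H4. rewrite Hmu in H3, H4. rewrite Hlam, Hmu in H1.
    pose proof (Rmult_le_pos _ _ (Rlt_le _ _ Hr1) (nrm2_pos (hsub (A (x (S (S j)))) (A (x (S j)))))) as N1.
    pose proof (Rmult_le_pos _ _ (Rlt_le _ _ Hr2) (nrm2_pos (hadd (hsub (W (x (S (S j)))) (W (x (S j)))) (hsub (y j) (y (S j)))))) as N2.
    revert H1 H2 H3 H4 N1 N2. expand. symnorm. intros. lra. }
  set (K := rho2 * rho2 / (2 * c0)).
  assert (CB : forall j, Psi (S j) + c0/2 * nrm2 (hsub (W xh) (y (S j))) <= fh + K * U (S j)).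
  { intro j. rewrite HPsi, HU.
    pose proof (L2 j _ _ Efh) as H3.
    destruct (Dsub _ _ Dxh (HDx j)) as [Dd Wd].
    pose proof (L1 j _ Dd) as H1. rewrite Asub, Wd, <- Hb in H1.
    pose proof (young (hsub (W xh) (y (S j))) (hsub (y (S j)) (y j)) c0 rho2 Hc0) as HY. fold K in HY.
    rewrite Hlam, Hmu. rewrite Hmu in H3.
    revert H1 H3 HY. expand. symnorm. intros. lra. }
  assert (CC : forall j, Psi (S (S j)) - Psi (S j) >= 3*c0*U (S (S j)) - rho2/2 * U (S (S j)) + rho1 * Rr (S (S j))
     + rho2/2 * Sq (S (S j)) - rho2 * U (S j)).
  { intro j. rewrite !HPsi, !HU. unfold Rr, Sq.
    destruct (Dsub _ _ (HDx (S j)) (HDx j)) as [Dd Wd].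
    pose proof (L1 j _ Dd) as H1. rewrite Asub, Wd in H1.
    pose proof (L2 j _ _ (Hfv (S j))) as H3. pose proof (L2 (S j) _ _ (Hfv j)) as H4.
    pose proof (Rmult_le_pos _ _ (Rlt_le _ _ Hr2) (nrm2_pos (hsub (hsub (y (S j)) (y j)) (hsub (W (x (S (S j)))) (y (S (S j))))))) as N3.
    pose proof (Rmult_le_pos _ _ (Rlt_le _ _ Hr2) (nrm2_pos (hsub (hsub (y (S j)) (y j)) (hsub (y (S (S j))) (y (S j)))))) as N4.
    rewrite !Hlam, !Hmu. rewrite Hmu in H4. rewrite Hmu in H3, H4. 
    revert H1 H3 H4 N3 N4. expand. symnorm. intros. lra. }

  set (gam := rho2 / c0).
  assert (Hgam : 0 < gam) by (unfold gam; apply Rdiv_lt_0_compat; lra).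
  pose (P := fun k => Psi k - gam * E k - rho2 * U k).
  assert (CD : forall j, P (S j) + E (S (S j)) / 2 <= P (S (S j))).
  { intro j. unfold P.
    pose proof (CA j) as HA1. pose proof (CC j) as HC.
    assert (HA2 : gam * (E (S (S j)) + 4 * c0 * U (S (S j))) <= gam * E (S j)) by (apply Rmult_le_compat_l; lra).
    replace (gam * (E (S (S j)) + 4 * c0 * U (S (S j)))) with (gam * E (S (S j)) + 4 * rho2 * U (S (S j))) in HA2
      by (unfold gam; field; lra).
    rewrite (HE (S (S j))) in *. pose proof (Rp (S (S j))). pose proof (Up (S (S j))).
    assert (0 <= c0 * U (S (S j))) by (apply Rmult_le_pos; lra).
    assert (0 <= rho1 * Rr (S (S j))) by (apply Rmult_le_pos; lra).
    assert (0 <= rho2 * U (S (S j))) by (apply Rmult_le_pos; lra).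
    lra. }
  assert (Emono : forall j, E (S (S j)) <= E (S j)).
  { intro j. pose proof (CA j). pose proof (Up (S (S j))). assert (0 <= c0 * U (S (S j))) by (apply Rmult_le_pos; lra). lra. }
  assert (Ep : forall k, 0 <= E k).
  { intro k. rewrite HE. pose proof (Rp k). pose proof (Sp k). pose proof (Up k).
    assert (0 <= rho1 * Rr k) by (apply Rmult_le_pos; lra).
    assert (0 <= rho2 * Sq k) by (apply Rmult_le_pos; lra).
    assert (0 <= rho2 * U k) by (apply Rmult_le_pos; lra). lra. }
  assert (Ele1 : forall j, E (S j) <= E 1%nat).
  { induction j; [lra|]. pose proof (Emono j). lra. }
  pose (T := fun n => E (S (S n))).
  assert (Tp : forall n, 0 <= T n) by (intro; apply Ep).
  assert (Psum : forall n, P 1%nat + / 2 * sum_f_R0 T n <= P (S (S n))).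
  { induction n; simpl.
    - pose proof (CD 0%nat). unfold T. lra.
    - pose proof (CD (S n)). unfold T in *. lra. }
  set (Cst := fh + K * (E 1%nat / rho2)).
  assert (HK : 0 <= K) by (unfold K; apply Rmult_le_pos; [apply Rmult_le_pos; lra|left; apply Rinv_0_lt_compat; lra]).
  assert (Upper : forall j, P (S j) + c0/2 * nrm2 (hsub (W xh) (y (S j))) <= Cst).
  { intro j. unfold P, Cst. pose proof (CB j).
    assert (rho2 * U (S j) <= E 1%nat).
    { pose proof (Ele1 j). rewrite (HE (S j)) in *. pose proof (Rp (S j)). pose proof (Sp (S j)).
      assert (0 <= rho1 * Rr (S j)) by (apply Rmult_le_pos; lra).
      assert (0 <= rho2 * Sq (S j)) by (apply Rmult_le_pos; lra). lra. }
    assert (U (S j) <= E 1%nat / rho2) by (apply div_bound; lra).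
    assert (K * U (S j) <= K * (E 1%nat / rho2)) by (apply Rmult_le_compat_l; lra).
    assert (0 <= gam * E (S j)) by (apply Rmult_le_pos; [lra|apply Ep]).
    assert (0 <= rho2 * U (S j)) by (apply Rmult_le_pos; [lra|apply Up]).
    lra. }
  set (Bd := 2 * (Cst - P 1%nat)).
  assert (Tsum : forall n, sum_f_R0 T n <= Bd).
  { intro n. pose proof (Psum n). pose proof (Upper (S n)).
    assert (0 <= c0/2 * nrm2 (hsub (W xh) (y (S (S n))))) by (apply Rmult_le_pos; [lra|apply nrm2_pos]).
    unfold Bd. lra. }
  assert (Pge : forall j, P 1%nat <= P (S j)).
  { intro j. destruct j; [lra|]. pose proof (Psum j). pose proof (sum_nonneg T Tp j). lra. }
  assert (Ybnd : forall j, nrm2 (hsub (W xh) (y (S j))) <= (Cst - P 1%nat) / (c0/2)).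
  { intro j. apply div_bound; [lra|]. pose proof (Upper j). pose proof (Pge j). lra. }
  assert (Rbnd : forall j, Rr (S j) <= E 1%nat / rho1).
  { intro j. apply div_bound; [lra|]. pose proof (Ele1 j). rewrite (HE (S j)) in *.
    pose proof (Sp (S j)). pose proof (Up (S j)).
    assert (0 <= rho2 * Sq (S j)) by (apply Rmult_le_pos; lra).
    assert (0 <= rho2 * U (S j)) by (apply Rmult_le_pos; lra). lra. }
  assert (Sbnd : forall j, Sq (S j) <= E 1%nat / rho2).
  { intro j. apply div_bound; [lra|]. pose proof (Ele1 j). rewrite (HE (S j)) in *.
    pose proof (Rp (S j)). pose proof (Up (S j)).
    assert (0 <= rho1 * Rr (S j)) by (apply Rmult_le_pos; lra).
    assert (0 <= rho2 * U (S j)) by (apply Rmult_le_pos; lra). lra. }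
  set (By := 2 * nrm2 (W xh) + 2 * ((Cst - P 1%nat) / (c0/2))).
  assert (Ybound : forall j, nrm2 (y (S j)) <= By).
  { intro j. pose proof (tri2' (y (S j)) (W xh)). pose proof (Ybnd j). unfold By. lra. }
  assert (Tlin : forall n, INR (S n) * T n <= sum_f_R0 T n).
  { induction n.
    - simpl. lra.
    - rewrite S_INR. simpl sum_f_R0. pose proof (Emono (S n)). fold (T n) (T (S n)) in H0.
      pose proof (pos_INR (S n)).
      assert (INR (S n) * T (S n) <= INR (S n) * T n) by (apply Rmult_le_compat_l; lra). lra. }

  pose (d := fun k => fval (S k) - fval k - hinner (mu k) (hsub (y (S k)) (y k))).
  assert (dlo : forall j, 0 <= d (S j)).
  { intro j. unfold d. pose proof (L2 j _ _ (Hfv (S j))) as H3.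
    pose proof (Rmult_le_pos _ _ (Rlt_le _ _ Hc0) (nrm2_pos (hsub (y (S (S j))) (y (S j))))). lra. }
  assert (dhi : forall j, d (S j) <= E (S (S j)) / 2).
  { intro j. unfold d. rewrite HE, HU. unfold Rr, Sq.
    pose proof (L2 (S j) _ _ (Hfv j)) as H4. rewrite Hmu in H4.
    pose proof (Rmult_le_pos _ _ (Rlt_le _ _ Hc0) (nrm2_pos (hsub (y (S j)) (y (S (S j)))))) as N0.
    pose proof (Rmult_le_pos _ _ (Rlt_le _ _ Hr1) (nrm2_pos (hsub (A (x (S (S j)))) b))) as N1.
    pose proof (Rmult_le_pos _ _ (Rlt_le _ _ Hr2) (nrm2_pos (hsub (hsub (W (x (S (S j)))) (y (S (S j)))) (hsub (y (S (S j))) (y (S j)))))) as N2.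
    revert H4 N0 N1 N2. expand. symnorm. intros. lra. }
  pose (term := fun n => d (S n) + E (S n)).
  assert (Inv : forall N, sum_f_R0 term N + T N <= E 1%nat + 3/2 * sum_f_R0 T N).
  { induction N; simpl; unfold term, T in *.
    - pose proof (dhi 0%nat). pose proof (Ep 2%nat). lra.
    - pose proof (dhi (S N)). pose proof (Ep (S (S (S N)))). lra. }
  assert (Hcv : {l | Un_cv (sum_f_R0 term) l}).
  { apply growing_cv.
    - intro n. simpl. unfold term. pose proof (dlo (S n)). pose proof (Ep (S (S n))). lra.
    - exists (E 1%nat + 3/2 * Bd). intros z [n ->]. pose proof (Inv n). pose proof (Tsum n). pose proof (Tp n). lra. }
  destruct Hcv as [l Hl].
  assert (HTB : forall n, INR (S n) * T n <= Bd) by (intro n; pose proof (Tlin n); pose proof (Tsum n); lra).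
  assert (Bmul : forall n v, v <= T n -> INR (S n) * v <= Bd).
  { intros n v Hv. pose proof (HTB n). pose proof (pos_INR (S n)).
    assert (INR (S n) * v <= INR (S n) * T n) by (apply Rmult_le_compat_l; lra). lra. }
  split; [|split; [|split; [|split; [|split]]]].
  - set (Bx := (2 * nrm2 b + 2 * (E 1%nat / rho1) + 2 * By + 2 * (E 1%nat / rho2)) / c1).
    apply (bounded_lemma _ Bx). intros n Hn. destruct n as [|j]; [lia|].
    apply div_bound; [lra|]. pose proof (HA4 _ (HDx j)).
    pose proof (tri2 (A (x (S j))) b). pose proof (tri2 (W (x (S j))) (y (S j))).
    pose proof (Rbnd j). pose proof (Sbnd j). pose proof (Ybound j). unfold Rr, Sq in *. lra.
  - apply (bounded_lemma _ By). intros n Hn. destruct n as [|j]; [lia|]. apply Ybound.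
  - exists d. split.
    + intros k Hk. destruct k as [|k]; [lia|]. unfold bregman. rewrite (Hfv (S k)), (Hfv k). reflexivity.
    + exists l. exact Hl.
  - intros eps He. destruct (conv_lemma Rr Bd rho1 Hr1 Rp) with (eps := eps) as [N HN]; [|exact He|].
    + intro n. apply Bmul. unfold T. rewrite HE. pose proof (Sp (S (S n))). pose proof (Up (S (S n))).
      assert (0 <= rho2 * Sq (S (S n))) by (apply Rmult_le_pos; lra).
      assert (0 <= rho2 * U (S (S n))) by (apply Rmult_le_pos; lra). lra.
    + exists N. intros n Hn. exact (HN n Hn).
  - intros eps He. destruct (conv_lemma Sq Bd rho2 Hr2 Sp) with (eps := eps) as [N HN]; [|exact He|].
    + intro n. apply Bmul. unfold T. rewrite HE. pose proof (Rp (S (S n))). pose proof (Up (S (S n))).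
      assert (0 <= rho1 * Rr (S (S n))) by (apply Rmult_le_pos; lra).
      assert (0 <= rho2 * U (S (S n))) by (apply Rmult_le_pos; lra). lra.
    + exists N. intros n Hn. unfold nrm. rewrite hsub_zero. exact (HN n Hn).
  - intros eps He. destruct (conv_lemma (fun n => nrm2 (hsub (y (S n)) (y n))) Bd rho2 Hr2) with (eps := eps) as [N HN]; [intro; apply nrm2_pos| |exact He|].
    + intro n. apply Bmul. unfold T. cbv beta. rewrite <- HU. pose proof (Emono (S n)). rewrite (HE (S (S (S n)))) in *.
      pose proof (Rp (S (S (S n)))). pose proof (Sp (S (S (S n)))).
      assert (0 <= rho1 * Rr (S (S (S n)))) by (apply Rmult_le_pos; lra).
      assert (0 <= rho2 * Sq (S (S (S n)))) by (apply Rmult_le_pos; lra). lra.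
    + exists N. intros n Hn. unfold nrm. rewrite hsub_zero. exact (HN n Hn).
Qed.
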